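(* Let $\{f_i\}_{i\in I}$ be a Parseval frame for a Hilbert space $\mathbb H$. Then for every $J\subset I$ and every $f\in\mathbb H$, $$\sum_{i\in J}|\langle f,f_i\rangle|^2+\Big\|\sum_{i\in J^c}\langle f,f_i\rangle f_i\Big\|^2\ge\tfrac34\|f\|^2,$$ where $J^c=I\setminus J$.
   Context: A family $\{f_i\}_{i\in I}$ in a Hilbert space $\mathbb H$ is a Parseval frame if $\sum_{i\in I}|\langle f,f_i\rangle|^2=\|f\|^2$ for all $f\in\mathbb H$. *)

(* Defs.v *)
From HB Require Import structures.
From mathcomp Require Import all_boot all_order all_algebra.
From mathcomp Require Import all_classical all_reals all_analysis.
From mathcomp Require Import complex.
From mathcomp Require Import finmap.
Set Implicit Arguments.
Unset Strict Implicit.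
Unset Printing Implicit Defensive.
Import Order.TTheory GRing.Theory Num.Theory.
Local Open Scope ring_scope.
Local Open Scope classical_set_scope.

Definition fin_subsets {I : choiceType} : set_system {fset I} :=
  filter_from setT (fun A => [set B | (A `<=` B)%fset]).

(* [sum_over_to J x s] : the family (x i)_{i in J} is unconditionally summable
   with sum s, i.e. the net of finite partial sums  A |-> \sum_{i in A, i in J} x i
   (A ranging over finite subsets of I, ordered by inclusion) converges to s. *)
Definition sum_over_to {I : choiceType} {K : numFieldType} {V : normedModType K}
  (J : set I) (x : I -> V) (s : V) : Prop :=
  (fun A : {fset I} => \sum_(i <- A | `[< J i >]) x i) @ fin_subsets --> s.

(* ip is an inner product on H (linear in the first argument, conjugate
   symmetric) which induces the norm of H: <x,x> = ||x||^2.  (Positive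
   definiteness follows from the last condition.) *)
Definition is_inner_product (R : realType) (H : normedModType R[i])
  (ip : H -> H -> R[i]) : Prop :=
  [/\ forall (a : R[i]) (x y z : H), ip (a *: x + y) z = a * ip x z + ip y z,
      forall x y : H, ip y x = (ip x y)^*
    & forall x : H, ip x x = `|x| ^+ 2].

Definition parseval_frame (R : realType) (H : normedModType R[i])
  (ip : H -> H -> R[i]) (I : choiceType) (F : I -> H) : Prop :=
  forall f : H,
    sum_over_to [set: I] (fun i => (`|ip f (F i)| ^+ 2 : R[i]^o)) (`|f| ^+ 2).

(* Main.v *)
Require Import Defs.
From HB Require Import structures.
From mathcomp Require Import all_boot all_order all_algebra.
From mathcomp Require Import lra.
From mathcomp Require Import all_classical all_reals all_analysis.
From mathcomp Require Import complex.
From mathcomp Require Import finmap.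
Import Order.TTheory GRing.Theory Num.Theory.
Local Open Scope ring_scope.
Local Open Scope classical_set_scope.

Lemma fin_subsets_proper (I : choiceType) : ProperFilter (@fin_subsets I).
Proof.
apply: filter_from_proper.
  apply: filter_from_filter; first by exists fset0.
  move=> A B _ _; exists (A `|` B)%fset => // C /= HC; split.
    exact: fsubset_trans (fsubsetUl _ _) HC.
  exact: fsubset_trans (fsubsetUr _ _) HC.
by move=> A _; exists A => /=.
Qed.
#[export] Existing Instance fin_subsets_proper.

Lemma near_fin (I : choiceType) (A0 : {fset I}) (P : {fset I} -> Prop) :
  (forall B, (A0 `<=` B)%fset -> P B) -> \forall B \near fin_subsets, P B.
Proof. by move=> HP; exists A0 => // B /= /HP. Qed.

Lemma near_fin_ex (I : choiceType) (P : {fset I} -> Prop) :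
  (\forall B \near fin_subsets, P B) -> exists A0, forall B, (A0 `<=` B)%fset -> P B.
Proof. by move=> [A0 _ HA0]; exists A0 => B HB; exact: HA0. Qed.

Lemma sum_mono (R : realType) (I : choiceType) (w : I -> R[i]) (P : pred I) (A B : {fset I}) :
  (forall i, 0 <= w i) -> (A `<=` B)%fset ->
  \sum_(i <- A | P i) w i <= \sum_(i <- B | P i) w i.
Proof.
move=> w0 AB; rewrite [X in _ <= X](big_fsetIDcond _ (mem A)) /=.
rewrite -[X in X <= _]addr0 lerD //; last by apply: sumr_ge0.
rewrite le_eqVlt; apply/orP; left; apply/eqP; apply: eq_fbigl_cond => i.
rewrite !inE /=; case: (boolP (i \in A)) => iA /=; last by rewrite andbF.
by rewrite (fsubsetP AB).
Qed.

Lemma sum_setT (R : realType) (I : choiceType) (w : I -> R[i]) (A : {fset I}) :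
  \sum_(i <- A | `[< [set: I] i >]) w i = \sum_(i <- A) w i.
Proof. by apply: eq_bigl => i; rewrite asboolT. Qed.

Lemma partial_le (R : realType) (I : choiceType) (w : I -> R[i]) (n : R[i]) :
  (forall i, 0 <= w i) -> n \is Num.real ->
  sum_over_to [set: I] (w : I -> R[i]^o) n ->
  forall A : {fset I}, \sum_(i <- A) w i <= n.
Proof.
move=> w0 nr hs A.
have Sr : forall B : {fset I}, \sum_(i <- B) w i \is Num.real.
  by move=> B; apply/ger0_real/sumr_ge0.
rewrite real_leNgt //; apply/negP => hlt.
have epos : 0 < \sum_(i <- A) w i - n by rewrite subr_gt0.
move/cvgrPdist_lt: hs => /(_ _ epos) /near_fin_ex [A1 HA1].
have := HA1 (A1 `|` A)%fset (fsubsetUl _ _); rewrite sum_setT /=.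
have := @sum_mono _ _ w xpredT _ _ w0 (fsubsetUr A1 A).
move=> hAB.
rewrite distrC ger0_norm; last by rewrite subr_ge0 (le_trans _ hAB) // ltW.
by move=> h; move: (lt_le_trans h (lerB hAB (lexx n))); rewrite ltxx.
Qed.

Lemma ge0_RC (R : realType) (z : R[i]) : 0 <= z -> z = (complex.Re z)%:C%C.
Proof. by case: z => a b; rewrite lecE /= => /andP[/eqP -> _]. Qed.

Arguments ge0_RC {R z}.

Lemma gt0_RC (R : realType) (z : R[i]) : 0 < z -> z = (complex.Re z)%:C%C /\ 0 < complex.Re z.
Proof. by case: z => a b; rewrite ltcE /= => /andP[/eqP -> ?]. Qed.

Lemma mono_cvg (R : realType) (I : choiceType) (w : I -> R[i]) (P : set I) (M : R[i]) :
  (forall i, 0 <= w i) ->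
  (forall A : {fset I}, \sum_(i <- A | `[< P i >]) w i <= M) ->
  exists a : R[i], [/\ sum_over_to P (w : I -> R[i]^o) a, 0 <= a &
     forall A : {fset I}, \sum_(i <- A | `[< P i >]) w i <= a].
Proof.
move=> w0 hM.
set s := fun A : {fset I} => \sum_(i <- A | `[< P i >]) w i.
have s0 : forall A, 0 <= s A by move=> A; apply: sumr_ge0.
set r := fun A => complex.Re (s A).
have sr : forall A, s A = (r A)%:C%C by move=> A; apply: ge0_RC.
have hs : has_sup (range r).
  split; first by exists (r fset0), fset0.
  exists (complex.Re M) => _ [A _ <-].
  by move: (hM A); rewrite -/(s A) lecE => /andP[_].
have ub : forall A, r A <= sup (range r).
  by move=> A; apply: sup_upper_bound => //; exists A.
have smono : forall A B, (A `<=` B)%fset -> r A <= r B.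
  move=> A B AB; have := @sum_mono _ _ w (fun i => `[< P i >]) _ _ w0 AB.
  by rewrite -/(s A) -/(s B) !sr lecR.
exists (sup (range r))%:C%C; split.
- apply/cvgrPdist_lt => eps /gt0_RC [-> ep].
  have [_ [A0 _ <-] hA0] := sup_adherent ep hs.
  exists A0 => // B /= A0B.
  rewrite -/(s B) sr -rmorphB /= ger0_norm; last first.
    by rewrite ler0c subr_ge0.
  rewrite ltcR; move: (smono _ _ A0B) hA0 => h1 h2.
  by move: h2 ep => /= h2 ep; lra.
- rewrite ler0c; apply: le_trans (ub fset0); rewrite /r.
  by move: (s0 fset0); rewrite lecE /= => /andP[].
- by move=> A; rewrite -/(s A) sr lecR.
Qed.
Lemma amgm (R : realType) (u v : R[i]) :
  `|u| * `|v| <= (`|u| ^+ 2 + `|v| ^+ 2) / 2.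
Proof.
rewrite (ge0_RC (normr_ge0 u)) (ge0_RC (normr_ge0 v)).
have -> : (2 : R[i]) = (2 : R)%:C%C by rewrite rmorph_nat.

rewrite -!rmorphXn -rmorphM -rmorphD -rmorphV ?unitfE // -rmorphM lecR.
set p := complex.Re _; set q := complex.Re _.
have := sqr_ge0 (p - q). nra.
Qed.
Section IP.
Context (R : realType) (H : normedModType R[i]) (ip : H -> H -> R[i])
  (hip : is_inner_product ip).

Lemma ipD x y z : ip (x + y) z = ip x z + ip y z.
Proof. by move: hip => [h _ _]; rewrite -{1}[x]scale1r h mul1r. Qed.
Lemma ip0l z : ip 0 z = 0.
Proof. by apply/eqP; rewrite -(addrI (ip 0 z) (_ : ip 0 z + ip 0 z = ip 0 z + 0)) // addr0 -ipD addr0. Qed.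
Lemma ipZ a x z : ip (a *: x) z = a * ip x z.
Proof. by move: hip => [h _ _]; rewrite -[a *: x]addr0 h ip0l addr0. Qed.
Lemma ipN x z : ip (- x) z = - ip x z.
Proof. by rewrite -scaleN1r ipZ mulN1r. Qed.
Lemma ipB x y z : ip (x - y) z = ip x z - ip y z.
Proof. by rewrite ipD ipN. Qed.
Lemma ipC x y : ip y x = (ip x y)^*.
Proof. by move: hip => []. Qed.
Lemma ipxx x : ip x x = `|x| ^+ 2.
Proof. by move: hip => []. Qed.
Lemma ipDr x y z : ip z (x + y) = ip z x + ip z y.
Proof. by rewrite ipC ipD rmorphD /= -!ipC. Qed.
Lemma ipZr a x z : ip z (a *: x) = a^* * ip z x.
Proof. by rewrite ipC ipZ rmorphM /= -ipC. Qed.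
Lemma ip0r z : ip z 0 = 0.
Proof. by rewrite ipC ip0l conjC0. Qed.
Lemma ipBr x y z : ip z (x - y) = ip z x - ip z y.
Proof. by rewrite -scaleN1r ipDr ipZr rmorphN1 mulN1r. Qed.

Lemma ip_sum (T : Type) (s : seq T) (P : pred T) (c : T -> H) z :
  ip (\sum_(i <- s | P i) c i) z = \sum_(i <- s | P i) ip (c i) z.
Proof.
elim/big_rec2: _ => [|i a b _ <-]; first exact: ip0l.
by rewrite ipD.
Qed.

Lemma CS x z : `|ip x z| <= `|x| * `|z|.
Proof.
have [z0|zn0] := eqVneq z 0.
  by rewrite z0 ip0r normr0 normr0 mulr0.
set c := ip x z; set t := `|z| ^+ 2.
have tgt0 : 0 < t by rewrite exprn_gt0 // normr_gt0.
set y := x - (c / t) *: z.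
have Hzy : ip z y = 0.
  rewrite /y ipBr ipZr ipxx -/t ipC -/c rmorphM /=.
  rewrite (_ : t^-1^* = t^-1); last first.
    by apply/CrealP; rewrite rpredV; apply/ger0_real; rewrite ltW.
  by rewrite -mulrA mulVf ?gt_eqF // mulr1 subrr.
have Hyy : ip y y = `|x| ^+ 2 - `|c| ^+ 2 / t.
  rewrite {1}/y ipB ipZ Hzy mulr0 subr0 /y ipBr ipZr ipxx -/c.
  rewrite rmorphM /= (_ : t^-1^* = t^-1); last first.
    by apply/CrealP; rewrite rpredV; apply/ger0_real; rewrite ltW.
  by rewrite normCK [c * _]mulrC mulrAC.
have h1 : `|c| ^+ 2 <= (`|x| * `|z|) ^+ 2.
  have : 0 <= ip y y by rewrite ipxx exprn_ge0.
  rewrite Hyy subr_ge0 ler_pdivrMr // => h; by rewrite exprMn.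
by rewrite -(ler_pXn2r (isT : (0 < 2)%N)) // ?nnegrE // mulr_ge0.
Qed.

Context (I : choiceType) (F : I -> H) (hP : parseval_frame ip F).

Lemma sum_cond_le (B : {fset I}) (Q : pred I) (w : I -> R[i]) :
  (forall i, 0 <= w i) -> \sum_(i <- B | Q i) w i <= \sum_(i <- B) w i.
Proof.
move=> w0; rewrite big_mkcond /=; apply: ler_sum => i _.
by case: (Q i) => //.
Qed.

Lemma synth (B : {fset I}) (Q : pred I) (c : I -> R[i]) :
  `|\sum_(i <- B | Q i) c i *: F i| ^+ 2 <= \sum_(i <- B | Q i) `|c i| ^+ 2.
Proof.
set x := \sum_(i <- B | Q i) c i *: F i.
set X := `|x| ^+ 2; set C := \sum_(i <- B | Q i) `|c i| ^+ 2.
set D := \sum_(i <- B | Q i) `|ip x (F i)| ^+ 2.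
have X0 : 0 <= X by rewrite exprn_ge0.
have hD : D <= X.
  have := sum_cond_le B Q _ (fun i => exprn_ge0 2 (normr_ge0 (ip x (F i)))). rewrite /D. move=> h; apply: le_trans h _.
  apply: (@partial_le R I (fun i => `|ip x (F i)| ^+ 2) X) => //.
  exact: ger0_real.
have e1 : X = \sum_(i <- B | Q i) c i * (ip x (F i))^*.
  rewrite /X -ipxx {1}/x ip_sum; apply: eq_bigr => i _.
  by rewrite ipZ (ipC x (F i)).
have e2 : X <= \sum_(i <- B | Q i) `|c i| * `|ip x (F i)|.
  rewrite -(ger0_norm X0) {1}e1; apply: le_trans (ler_norm_sum _ _ _) _.
  by apply: ler_sum => i _; rewrite normrM norm_conjC.
have e3 : X <= (C + D) / 2.
  apply: le_trans e2 _; rewrite /C /D -big_split /= mulr_suml.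
  by apply: ler_sum => i _; apply: amgm.
have e4 : X <= (C + X) / 2 by apply: le_trans e3 _; rewrite ler_pM2r // lerD2l.
move: e4; rewrite ler_pdivlMr // mulrDr mulr1 lerD2r //.
Qed.
End IP.
Lemma split_sub (V : zmodType) (I : choiceType) (G : I -> V) (P : pred I)
  (A0 B : {fset I}) : (A0 `<=` B)%fset ->
  \sum_(i <- B | P i) G i = \sum_(i <- A0 | P i) G i +
    \sum_(i <- [fset x in B | x \notin A0]%fset | P i) G i.
Proof.
move=> AB; rewrite (big_fsetIDcond _ (mem A0)) /=; congr (_ + _).
apply: eq_fbigl_cond => i; rewrite !inE /=; case: (boolP (i \in A0)) => iA /=.
  by rewrite (fsubsetP AB).
by rewrite andbF.
Qed.
Lemma final_real (R : realType) (ar G nr : R) :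
  0 <= ar -> 0 <= G -> 0 <= nr -> `|nr ^+ 2 - ar| <= G * nr ->
  3 / 4 * nr ^+ 2 <= ar + G ^+ 2.
Proof.
move=> a0 G0 n0 h.
have hb : (nr ^+ 2 - ar) ^+ 2 <= (G * nr) ^+ 2.
  rewrite -real_normK ?num_real //.
  by rewrite ler_pXn2r ?nnegrE ?mulr_ge0.
have [->|npos] := eqVneq nr 0.
  by rewrite expr0n /= mulr0 addr_ge0 // sqr_ge0.
have Npos : 0 < nr ^+ 2 by rewrite exprn_gt0 // lt_neqAle eq_sym npos n0.
set N := nr ^+ 2 in Npos hb *.
set b := N - ar in hb.
rewrite exprMn -/N in hb.
rewrite -(ler_pM2l Npos).
have : 0 <= (b - N / 2) ^+ 2 by apply: sqr_ge0.
rewrite /b => h2.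
rewrite /b !expr2 in hb h2 *; clear h; clearbody N; nra.
Qed.

Lemma normRC (R : realType) (x : R) : `|x%:C%C| = `|x|%:C%C.
Proof.
have [x0|x0] := leP 0 x.
  by rewrite !ger0_norm // ler0c.
by rewrite -normrN -rmorphN ger0_norm ?ler0c ?oppr_ge0 ?ltW // ltr0_norm.
Qed.

Theorem proposition4p1 (R : realType) (H : completeNormedModType R[i])
  (ip : H -> H -> R[i]) (I : choiceType) (F : I -> H) :
  is_inner_product ip -> parseval_frame ip F ->
  forall (J : set I) (f : H),
  exists (a : R[i]^o) (g : H),
    [/\ sum_over_to J (fun i => (`|ip f (F i)| ^+ 2 : R[i]^o)) a,
        sum_over_to (~` J) (fun i => ip f (F i) *: F i) g
      & a + `|g| ^+ 2 >= (3 / 4) * `|f| ^+ 2].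
Proof.
move=> hip hP J f.
set c := fun i => ip f (F i).
set w := fun i => `|c i| ^+ 2.
set n := `|f| ^+ 2.
have w0 : forall i, 0 <= w i by move=> i; rewrite exprn_ge0.
have nr : n \is Num.real by apply: ger0_real; rewrite exprn_ge0.
have hPf : sum_over_to [set: I] (w : I -> R[i]^o) n := hP f.
have wle : forall A : {fset I}, \sum_(i <- A) w i <= n.
  by move=> A; apply: (@partial_le _ _ w n w0 nr hPf).
have [a [ha a0 aub]] : exists a : R[i], [/\ sum_over_to J (w : I -> R[i]^o) a, 0 <= a &
     forall A : {fset I}, \sum_(i <- A | `[< J i >]) w i <= a].
  apply: mono_cvg => // A; apply: le_trans (wle A).
  exact: sum_cond_le.
set P := ~` J.
set s := fun B : {fset I} => \sum_(i <- B | `[< P i >]) c i *: F i.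
have cg : cvg (s @ fin_subsets).
  apply: cauchy_cvg; apply: cauchy_exP => eps /gt0_RC [epsE ep].
  set e := complex.Re eps in epsE ep.
  have dpos : 0 < (e ^+ 2)%:C%C :> R[i] by rewrite ltcR exprn_gt0.
  have [A0 hA0] := @near_fin_ex _ _ ((cvgrPdist_lt _ _).1 hPf _ dpos).
  have hA0' := hA0 A0 (fsubset_refl _).
  rewrite sum_setT ger0_norm ?subr_ge0 ?wle // in hA0'.
  exists (s A0); exists A0 => // B /= A0B.
  rewrite -ball_normE /ball_ /= /s (split_sub _ _ _ _ _ _ A0B) opprD addrA subrr add0r normrN.
  set B' := [fset x in B | x \notin A0]%fset.
  have h1 := @synth _ _ _ hip _ _ hP B' (fun i => `[< P i >]) c.
  have h2 : \sum_(i <- B' | `[< P i >]) `|c i| ^+ 2 <= \sum_(i <- B') w i.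
    exact: sum_cond_le.
  have h3 : \sum_(i <- B') w i <= n - \sum_(i <- A0) w i.
    by rewrite lerBrDl -(split_sub _ _ w xpredT _ _ A0B) wle.
  have h4 : `|\sum_(i <- B' | `[< P i >]) c i *: F i| ^+ 2 < eps ^+ 2.
    rewrite epsE -rmorphXn /=.
    by apply: le_lt_trans h1 (le_lt_trans h2 (le_lt_trans h3 hA0')).
  by rewrite -(ltr_pXn2r (isT : (0 < 2)%N)) ?nnegrE // epsE ler0c ltW.
set g := lim (s @ fin_subsets).
have hg : s @ fin_subsets --> g := cg.
exists a, g; split => //.
have h1 : (fun B => (ip (s B) f : R[i]^o)) @ fin_subsets --> (ip g f : R[i]^o).
  apply/cvgrPdist_lt => eps ep.
  have [f0|fn0] := eqVneq f 0.
    by exists fset0 => // B _ /=; rewrite f0 !(@ip0r _ _ _ hip) subrr normr0.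
  have fp : 0 < `|f| by rewrite normr_gt0.
  move/cvgrPdist_lt: hg => /(_ _ (divr_gt0 ep fp)).
  apply: filterS => B hB.
  rewrite -(@ipB _ _ _ hip); apply: le_lt_trans (@CS _ _ _ hip _ _) _.
  by rewrite -ltr_pdivlMr.
have h2 : (fun B => (ip (s B) f : R[i]^o)) @ fin_subsets --> (n - a : R[i]^o).
  have -> : (fun B => (ip (s B) f : R[i]^o)) =
    (fun B => \sum_(i <- B | `[< [set: I] i >]) (w i : R[i]^o) -
       \sum_(i <- B | `[< J i >]) (w i : R[i]^o)).
    apply/funext => B /=; rewrite /s (@ip_sum _ _ _ hip) sum_setT.
    rewrite [X in _ = X - _](bigID (fun i => `[< J i >])) /= addrAC subrr add0r.
    apply: eq_big => [i|i _]; first exact: asbool_neg.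
    by rewrite (@ipZ _ _ _ hip) (@ipC _ _ _ hip f (F i)) -normCK.
  exact: (cvgB hPf ha).
have gf : ip g f = n - a := cvg_unique (@norm_hausdorff _ _) h1 h2.
have hcs : `|n - a| <= `|g| * `|f| by rewrite -gf; apply: CS.
rewrite /n in hcs *.
rewrite (ge0_RC a0) (ge0_RC (normr_ge0 g)) (ge0_RC (normr_ge0 f)) in hcs *.
have hm : forall x y : R, x%:C%C * y%:C%C = (x * y)%:C%C :> R[i] by move=> x y; rewrite rmorphM.
rewrite hm -!rmorphXn -rmorphB normRC lecR in hcs.
have -> : (3 / 4 : R[i]) = (3 / 4 : R)%:C%C.
  by rewrite rmorphM rmorphV ?unitfE // !rmorph_nat.
rewrite -!rmorphXn hm -rmorphD lecR; apply: final_real => //.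
- by move: a0; rewrite lecE => /andP[_].
- by move: (normr_ge0 g); rewrite lecE => /andP[_].
- by move: (normr_ge0 f); rewrite lecE => /andP[_].
Qed.
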